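(* Let $l$ be a positive integer and let $\alpha,\beta,\gamma,\alpha',\beta',\gamma'$ be real numbers such that $\alpha\ge 0$, $\alpha'\ge 0$, $\beta\ge 0$, $-\alpha'\le \beta'\le 0$, $\alpha+\beta+\gamma\ge 0$ and $\alpha'+\beta'+\gamma'\ge 0$. Let $T(n,k)$ be defined by $T(1,1)=1$, $T(n,k)=0$ unless $1\le k\le n$, and $$T(n,k)=(\alpha n+\beta k+\gamma)^l\,T(n-1,k)+(\alpha' n+\beta' k+\gamma')^l\,T(n-1,k-1)\qquad(n\ge 2,\ 1\le k\le n).$$ Then for every $n\ge 1$ the sequence $(T(n,k))_k$ is log-concave in $k$, i.e. $T(n,k)^2\ge T(n,k-1)T(n,k+1)$ for all $k$. *)

(* Defs.v *)
From Stdlib Require Import Reals.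
Open Scope R_scope.

Fixpoint T (a b c a' b' c' : R) (l : nat) (n k : nat) {struct n} : R :=
  match n with
  | O => 0
  | S m =>
    match m with
    | O => if Nat.eqb k 1 then 1 else 0
    | S _ =>
      if andb (Nat.leb 1 k) (Nat.leb k n) then
        (a * INR n + b * INR k + c) ^ l * T a b c a' b' c' l m k
        + (a' * INR n + b' * INR k + c') ^ l * T a b c a' b' c' l m (k - 1)
      else 0
    end
  end.

(* Main.v *)
Require Import Defs.
From Stdlib Require Import Reals Lra Lia Psatz.
Open Scope R_scope.

Section S.
Variables (a b c a2 b2 c2 : R) (l : nat).
Notation Tn := (T a b c a2 b2 c2 l).
Definition Fc (n k : nat) := a * INR n + b * INR k + c.
Definition Gc (n k : nat) := a2 * INR n + b2 * INR k + c2.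

Lemma T_0 k : Tn 0 k = 0.
Proof. reflexivity. Qed.

Lemma T_k0 n : Tn n 0 = 0.
Proof. destruct n as [|[|m]]; reflexivity. Qed.

Lemma T_big n k : (n < k)%nat -> Tn n k = 0.
Proof.
  intros H. destruct n as [|[|m]]; simpl.
  - reflexivity.
  - destruct k as [|[|k]]; [reflexivity|lia|reflexivity].
  - replace (Nat.leb k (S (S m))) with false by (symmetry; apply Nat.leb_gt; lia).
    rewrite Bool.andb_false_r. reflexivity.
Qed.

Lemma T_11 : Tn 1 1 = 1.
Proof. reflexivity. Qed.

Lemma T_rec m k : (1 <= k <= S (S m))%nat ->
  Tn (S (S m)) k = Fc (S (S m)) k ^ l * Tn (S m) k + Gc (S (S m)) k ^ l * Tn (S m) (k - 1).
Proof.
  intros H. change (Tn (S (S m)) k) with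
   (if andb (Nat.leb 1 k) (Nat.leb k (S (S m))) then
        (a * INR (S (S m)) + b * INR k + c) ^ l * Tn (S m) k
        + (a2 * INR (S (S m)) + b2 * INR k + c2) ^ l * Tn (S m) (k - 1) else 0).
  replace (Nat.leb 1 k) with true by (symmetry; apply Nat.leb_le; lia).
  replace (Nat.leb k (S (S m))) with true by (symmetry; apply Nat.leb_le; lia).
  reflexivity.
Qed.
End S.

Section P.
Variables (a b c a2 b2 c2 : R) (l : nat).
Hypotheses (Ha : 0 <= a) (Hb : 0 <= b) (Ha2 : 0 <= a2) (Hb2 : - a2 <= b2) (Hb2' : b2 <= 0)
  (Hm : 0 < a + b + c) (Hm2 : 0 < a2 + b2 + c2).
Notation Tn := (T a b c a2 b2 c2 l).
Notation F := (Fc a b c).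
Notation G := (Fc a2 b2 c2).

Lemma INR_ge1 n : (1 <= n)%nat -> 1 <= INR n.
Proof. intros H. apply (le_INR 1 n) in H. simpl in H. exact H. Qed.

Lemma Fpos n k : (1 <= n)%nat -> (1 <= k)%nat -> 0 < F n k.
Proof.
  intros Hn Hk. unfold Fc. apply INR_ge1 in Hn. apply INR_ge1 in Hk.
  assert (0 <= a * (INR n - 1)) by (apply Rmult_le_pos; lra).
  assert (0 <= b * (INR k - 1)) by (apply Rmult_le_pos; lra).
  nra.
Qed.

Lemma Gpos n k : (1 <= n)%nat -> (k <= n)%nat -> 0 < G n k.
Proof.
  intros Hn Hk. unfold Fc. apply INR_ge1 in Hn. apply le_INR in Hk.
  assert (0 <= (a2 + b2) * (INR n - 1)) by (apply Rmult_le_pos; lra).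
  assert (0 <= (- b2) * (INR n - INR k)) by (apply Rmult_le_pos; lra).
  nra.
Qed.

Lemma Gc_eq n k : Gc a2 b2 c2 n k = G n k.
Proof. reflexivity. Qed.

Lemma Tnonneg n : forall k, 0 <= Tn n k.
Proof.
  induction n as [|[|m] IH]; intros k.
  - rewrite T_0; lra.
  - change (Tn 1 k) with (if Nat.eqb k 1 then 1 else 0). destruct (Nat.eqb k 1); lra.
  - destruct (Nat.eq_dec k 0) as [->|Hk0]. { rewrite T_k0; lra. }
    destruct (Compare_dec.le_lt_dec k (S (S m))) as [Hk|Hk].
    + rewrite T_rec by lia. rewrite Gc_eq.
      pose proof (Fpos (S (S m)) k ltac:(lia) ltac:(lia)).
      pose proof (Gpos (S (S m)) k ltac:(lia) ltac:(lia)).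
      pose proof (IH k). pose proof (IH (k-1)%nat).
      assert (0 <= F (S (S m)) k ^ l) by (apply pow_le; lra).
      assert (0 <= G (S (S m)) k ^ l) by (apply pow_le; lra).
      nra.
    + rewrite T_big by lia. lra.
Qed.

Lemma Tpos m : forall k, (1 <= k <= S m)%nat -> 0 < Tn (S m) k.
Proof.
  induction m as [|m IH]; intros k Hk.
  - replace k with 1%nat by lia. rewrite T_11. lra.
  - rewrite T_rec by lia. rewrite Gc_eq.
    pose proof (Fpos (S (S m)) k ltac:(lia) ltac:(lia)).
    pose proof (Gpos (S (S m)) k ltac:(lia) ltac:(lia)).
    pose proof (Tnonneg (S m) k). pose proof (Tnonneg (S m) (k-1)).
    assert (0 < F (S (S m)) k ^ l) by (apply pow_lt; lra).
    assert (0 < G (S (S m)) k ^ l) by (apply pow_lt; lra).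
    destruct (Compare_dec.le_lt_dec k (S m)).
    + pose proof (IH k ltac:(lia)). nra.
    + pose proof (IH (k-1)%nat ltac:(lia)). nra.
Qed.
End P.

Lemma core (z0 z1 z2 z3 xm x0 xp ym y0 yp v w : R) :
  v*xm*yp = w*x0*y0 ->
  v*xm*xp*z1*z3 <= w*(x0*x0)*(z2*z2) ->
  v*ym*yp*z0*z2 <= w*(y0*y0)*(z1*z1) ->
  v*xp*ym*z0*z3 <= w*x0*y0*z1*z2 ->
  v*((xm*z1 + ym*z0)*(xp*z3 + yp*z2)) <= w*(x0*z2 + y0*z1)^2.
Proof.
  intros E H1 H2 H3.
  assert (Id : w*(x0*z2 + y0*z1)^2 - v*((xm*z1 + ym*z0)*(xp*z3 + yp*z2)) =
    (w*(x0*x0)*(z2*z2) - v*xm*xp*z1*z3) + (w*(y0*y0)*(z1*z1) - v*ym*yp*z0*z2)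
    + (w*x0*y0*z1*z2 - v*xp*ym*z0*z3) + (w*x0*y0 - v*xm*yp)*(z1*z2)) by ring.
  rewrite E in Id. lra.
Qed.

Lemma cancel_l p A B : 0 < p -> p*A <= p*B -> A <= B.
Proof. intros Hp H. apply Rmult_le_reg_l with p; auto. Qed.

Lemma H1lem v xm xp w z1 z2 z3 x0 v0' w0' :
  0<=v -> 0<=xm -> 0<=xp -> 0<=w -> 0<=z1 ->
  (z3 = 0 \/ (0 < v0' /\ v0'*(z1*z3) <= w0'*(z2*z2) /\ v*xm*xp*w0' <= w*(x0*x0)*v0')) ->
  v*xm*xp*z1*z3 <= w*(x0*x0)*(z2*z2).
Proof.
  intros Hv Hxm Hxp Hw Hz1 [->|[Hp [I C]]].
  - rewrite Rmult_0_r. apply Rmult_le_pos; [apply Rmult_le_pos; [lra|nra]|nra].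
  - apply cancel_l with v0'; auto.
    assert (0 <= v*xm*xp) by (apply Rmult_le_pos; [apply Rmult_le_pos|]; lra).
    assert (S1: (v*xm*xp)*(v0'*(z1*z3)) <= (v*xm*xp)*(w0'*(z2*z2)))
      by (apply Rmult_le_compat_l; auto).
    assert (S2: (v*xm*xp*w0')*(z2*z2) <= (w*(x0*x0)*v0')*(z2*z2))
      by (apply Rmult_le_compat_r; nra).
    nra.
Qed.

Lemma H2lem v ym yp w z0 z1 z2 y0 vm wm :
  0<=v -> 0<=ym -> 0<=yp -> 0<=w -> 0<=z2 ->
  (z0 = 0 \/ (0 < vm /\ vm*(z0*z2) <= wm*(z1*z1) /\ v*ym*yp*wm <= w*(y0*y0)*vm)) ->
  v*ym*yp*z0*z2 <= w*(y0*y0)*(z1*z1).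
Proof.
  intros Hv Hxm Hxp Hw Hz1 [->|[Hp [I C]]].
  - rewrite Rmult_0_r, Rmult_0_l. apply Rmult_le_pos; [apply Rmult_le_pos; [lra|nra]|nra].
  - apply cancel_l with vm; auto.
    assert (0 <= v*ym*yp) by (apply Rmult_le_pos; [apply Rmult_le_pos|]; lra).
    assert (S1: (v*ym*yp)*(vm*(z0*z2)) <= (v*ym*yp)*(wm*(z1*z1)))
      by (apply Rmult_le_compat_l; auto).
    assert (S2: (v*ym*yp*wm)*(z1*z1) <= (w*(y0*y0)*vm)*(z1*z1))
      by (apply Rmult_le_compat_r; nra).
    nra.
Qed.

Lemma H3lem v xp ym w z0 z1 z2 z3 x0 y0 vm wm v0' w0' :
  0<=v -> 0<=xp -> 0<=ym -> 0<=w -> 0<=x0 -> 0<=y0 -> 0<=z0 -> 0<=z1 -> 0<=z2 -> 0<=z3 ->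
  (z0 = 0 \/ z3 = 0 \/ (0 < vm /\ 0 < v0' /\ 0 < z1 /\ 0 < z2 /\
     vm*(z0*z2) <= wm*(z1*z1) /\ v0'*(z1*z3) <= w0'*(z2*z2) /\
     v*xp*ym*(wm*w0') <= w*x0*y0*(vm*v0'))) ->
  v*xp*ym*z0*z3 <= w*x0*y0*z1*z2.
Proof.
  intros Hv Hxp Hym Hw Hx0 Hy0 Hz0 Hz1 Hz2 Hz3 [->|[->|[Hvm [Hv0 [Pz1 [Pz2 [I1 [I2 C]]]]]]]].
  - rewrite Rmult_0_r, Rmult_0_l.
    repeat apply Rmult_le_pos; lra.
  - rewrite Rmult_0_r.
    repeat apply Rmult_le_pos; lra.
  - assert (M: (vm*(z0*z2))*(v0'*(z1*z3)) <= (wm*(z1*z1))*(w0'*(z2*z2))).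
    { apply Rmult_le_compat; auto; apply Rmult_le_pos; try lra; apply Rmult_le_pos; lra. }
    assert (K: (vm*v0'*z0*z3) <= (wm*w0'*z1*z2)).
    { apply cancel_l with (z1*z2). nra. nra. }
    apply cancel_l with (vm*v0'). nra.
    assert (0 <= v*xp*ym) by (apply Rmult_le_pos; [apply Rmult_le_pos|]; lra).
    assert (S1: (v*xp*ym)*(vm*v0'*z0*z3) <= (v*xp*ym)*(wm*w0'*z1*z2))
      by (apply Rmult_le_compat_l; auto).
    assert (S2: (v*xp*ym*(wm*w0'))*(z1*z2) <= (w*x0*y0*(vm*v0'))*(z1*z2))
      by (apply Rmult_le_compat_r; nra).
    nra.
Qed.

Lemma prod3 (P A B Cc D : R): 0<=P -> 0<=A -> A<=B -> 0<=Cc -> Cc<=D -> P*(A*Cc) <= P*(B*D).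
Proof. intros. apply Rmult_le_compat_l; auto. apply Rmult_le_compat; auto. Qed.

Lemma prod2 (A B Cc D : R) : A <= B -> Cc <= D -> 0<=A -> 0<=Cc -> A*Cc <= B*D.
Proof. intros; apply Rmult_le_compat; auto. Qed.

Lemma pow_mono (x y : R) (n : nat) : 0 <= x -> x <= y -> x ^ n <= y ^ n.
Proof. intros; apply pow_incr; lra. Qed.

Section Co.
Variables (a b c a2 b2 c2 : R) (l : nat).
Hypotheses (Ha : 0 <= a) (Hb : 0 <= b) (Ha2 : 0 <= a2) (Hb2 : - a2 <= b2) (Hb2' : b2 <= 0)
  (Hm : 0 < a + b + c) (Hm2 : 0 < a2 + b2 + c2).
Notation F := (Fc a b c).
Notation G := (Fc a2 b2 c2).

Lemma INR_pred k : (1 <= k)%nat -> INR (k - 1) = INR k - 1.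
Proof. intros; rewrite minus_INR by lia; simpl; lra. Qed.
Lemma INR_pred2 k : (2 <= k)%nat -> INR (k - 2) = INR k - 2.
Proof. intros; rewrite minus_INR by lia; simpl; lra. Qed.
Lemma INR_succ k : INR (k + 1) = INR k + 1.
Proof. rewrite plus_INR; simpl; lra. Qed.

Ltac unf := unfold Fc; rewrite ?S_INR, ?INR_pred, ?INR_pred2, ?INR_succ by lia.

Lemma FP m k : (1 <= m)%nat -> (1 <= k)%nat -> 0 < F m k.
Proof. intros; apply Fpos; auto. Qed.
Lemma GP m k : (1 <= m)%nat -> (k <= m)%nat -> 0 < G m k.
Proof. intros; apply (Gpos a2 b2 c2); auto. Qed.

Lemma C1p m k : (1 <= m)%nat -> (2 <= k)%nat -> (k + 1 <= m)%nat ->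
  (F (S m) k * G (S m) k)^l * F (S m) (k-1) ^ l * F (S m) (k+1) ^ l * (F m (k-1) * G m (k+1))^l
  <= (F (S m) (k-1) * G (S m) (k+1))^l * (F (S m) k ^ l * F (S m) k ^ l) * (F m k * G m k)^l.
Proof.
  intros H1 H2 H3.
  pose proof (FP (S m) k ltac:(lia) ltac:(lia)) as p1.
  pose proof (FP (S m) (k-1) ltac:(lia) ltac:(lia)) as p2.
  pose proof (FP (S m) (k+1) ltac:(lia) ltac:(lia)) as p3.
  pose proof (FP m (k-1) ltac:(lia) ltac:(lia)) as p4.
  pose proof (GP (S m) k ltac:(lia) ltac:(lia)) as p5.
  pose proof (GP m (k+1) ltac:(lia) ltac:(lia)) as p6.
  pose proof (FP m k ltac:(lia) ltac:(lia)) as p7.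
  pose proof (GP m k ltac:(lia) ltac:(lia)) as p8.
  pose proof (GP (S m) (k+1) ltac:(lia) ltac:(lia)) as p9.
  assert (S1 : F (S m) (k+1) * F m (k-1) <= F (S m) k * F m k).
  { unf. nra. }
  assert (S2 : G (S m) k * G m (k+1) <= G (S m) (k+1) * G m k).
  { unf. nra. }
  assert (U : (F (S m) k * G (S m) k) * F (S m) (k-1) * F (S m) (k+1) * (F m (k-1) * G m (k+1))
     <= (F (S m) (k-1) * G (S m) (k+1)) * (F (S m) k * F (S m) k) * (F m k * G m k)).
  { assert (X := prod2 _ _ _ _ S1 S2 ltac:(nra) ltac:(nra)).
    assert (Y := Rmult_le_compat_l (F (S m) k * F (S m) (k-1)) _ _ ltac:(nra) X).
    lra. }
  rewrite <- !Rpow_mult_distr. apply pow_mono; [|exact U].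
  repeat apply Rmult_le_pos; lra.
Qed.

Lemma C2p m k : (1 <= m)%nat -> (3 <= k)%nat -> (k <= m)%nat ->
  (F (S m) k * G (S m) k)^l * G (S m) (k-1) ^ l * G (S m) (k+1) ^ l * (F m (k-2) * G m k)^l
  <= (F (S m) (k-1) * G (S m) (k+1))^l * (G (S m) k ^ l * G (S m) k ^ l) * (F m (k-1) * G m (k-1))^l.
Proof.
  intros H1 H2 H3.
  pose proof (FP (S m) k ltac:(lia) ltac:(lia)) as p1.
  pose proof (FP (S m) (k-1) ltac:(lia) ltac:(lia)) as p2.
  pose proof (FP m (k-2) ltac:(lia) ltac:(lia)) as p3.
  pose proof (FP m (k-1) ltac:(lia) ltac:(lia)) as p4.
  pose proof (GP (S m) k ltac:(lia) ltac:(lia)) as p5.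
  pose proof (GP (S m) (k-1) ltac:(lia) ltac:(lia)) as p6.
  pose proof (GP (S m) (k+1) ltac:(lia) ltac:(lia)) as p7.
  pose proof (GP m k ltac:(lia) ltac:(lia)) as p8.
  pose proof (GP m (k-1) ltac:(lia) ltac:(lia)) as p9.
  assert (S1 : F (S m) k * F m (k-2) <= F (S m) (k-1) * F m (k-1)).
  { unf. nra. }
  assert (S2 : G (S m) (k-1) * G m k <= G (S m) k * G m (k-1)).
  { unf. nra. }
  assert (U : (F (S m) k * G (S m) k) * G (S m) (k-1) * G (S m) (k+1) * (F m (k-2) * G m k)
     <= (F (S m) (k-1) * G (S m) (k+1)) * (G (S m) k * G (S m) k) * (F m (k-1) * G m (k-1))).
  { assert (X := prod2 _ _ _ _ S1 S2 ltac:(nra) ltac:(nra)).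
    assert (Y := Rmult_le_compat_l (G (S m) k * G (S m) (k+1)) _ _ ltac:(nra) X).
    lra. }
  rewrite <- !Rpow_mult_distr. apply pow_mono; [|exact U].
  repeat apply Rmult_le_pos; lra.
Qed.

Lemma C3p m k : (1 <= m)%nat -> (3 <= k)%nat -> (k + 1 <= m)%nat ->
  (F (S m) k * G (S m) k)^l * F (S m) (k+1) ^ l * G (S m) (k-1) ^ l
     * ((F m (k-2) * G m k)^l * (F m (k-1) * G m (k+1))^l)
  <= (F (S m) (k-1) * G (S m) (k+1))^l * F (S m) k ^ l * G (S m) k ^ l
     * ((F m (k-1) * G m (k-1))^l * (F m k * G m k)^l).
Proof.
  intros H1 H2 H3.
  pose proof (FP (S m) k ltac:(lia) ltac:(lia)) as p1.
  pose proof (FP (S m) (k-1) ltac:(lia) ltac:(lia)) as p2.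
  pose proof (FP (S m) (k+1) ltac:(lia) ltac:(lia)) as p2'.
  pose proof (FP m (k-2) ltac:(lia) ltac:(lia)) as p3.
  pose proof (FP m (k-1) ltac:(lia) ltac:(lia)) as p4.
  pose proof (FP m k ltac:(lia) ltac:(lia)) as p4'.
  pose proof (GP (S m) k ltac:(lia) ltac:(lia)) as p5.
  pose proof (GP (S m) (k-1) ltac:(lia) ltac:(lia)) as p6.
  pose proof (GP (S m) (k+1) ltac:(lia) ltac:(lia)) as p7.
  pose proof (GP m k ltac:(lia) ltac:(lia)) as p8.
  pose proof (GP m (k-1) ltac:(lia) ltac:(lia)) as p9.
  pose proof (GP m (k+1) ltac:(lia) ltac:(lia)) as p10.
  assert (S1 : F (S m) (k+1) * F m (k-2) <= F (S m) (k-1) * F m k).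
  { unf. nra. }
  assert (S2 : G (S m) (k-1) * G m (k+1) <= G (S m) (k+1) * G m (k-1)).
  { unf. nra. }
  assert (U : (F (S m) k * G (S m) k) * F (S m) (k+1) * G (S m) (k-1)
     * ((F m (k-2) * G m k) * (F m (k-1) * G m (k+1)))
     <= (F (S m) (k-1) * G (S m) (k+1)) * F (S m) k * G (S m) k
     * ((F m (k-1) * G m (k-1)) * (F m k * G m k))).
  { assert (X := prod2 _ _ _ _ S1 S2 ltac:(nra) ltac:(nra)).
    assert (Y := Rmult_le_compat_l (F (S m) k * G (S m) k * F m (k-1) * G m k) _ _ ltac:(repeat apply Rmult_le_pos; lra) X).
    lra. }
  rewrite <- !Rpow_mult_distr. apply pow_mono; [|exact U].
  repeat apply Rmult_le_pos; lra.
Qed.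
End Co.

Section St.
Variables (a b c a2 b2 c2 : R) (l : nat).
Hypotheses (Ha : 0 <= a) (Hb : 0 <= b) (Ha2 : 0 <= a2) (Hb2 : - a2 <= b2) (Hb2' : b2 <= 0)
  (Hm : 0 < a + b + c) (Hm2 : 0 < a2 + b2 + c2).
Notation Tn := (T a b c a2 b2 c2 l).
Notation F := (Fc a b c).
Notation G := (Fc a2 b2 c2).

Definition Inv m := forall k, (2 <= k)%nat -> (k + 1 <= m)%nat ->
  (F m k * G m k)^l * (Tn m (k-1) * Tn m (k+1)) <= (F m (k-1) * G m (k+1))^l * (Tn m k * Tn m k).

Lemma FP' m k : (1 <= m)%nat -> (1 <= k)%nat -> 0 < F m k.
Proof. intros; apply Fpos; auto. Qed.
Lemma GP' m k : (1 <= m)%nat -> (k <= m)%nat -> 0 < G m k.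
Proof. intros; apply (Gpos a2 b2 c2); auto. Qed.
Lemma TN n k : 0 <= Tn n k.
Proof. apply Tnonneg; auto. Qed.

Lemma Inv_step m : (1 <= m)%nat -> Inv m -> Inv (S m).
Proof.
  intros Hm1 IH k Hk2 Hk.
  destruct m as [|m']; [lia|].
  rewrite !T_rec by lia.
  set (m := S m') in *.
  assert (Hkm : (k <= m)%nat) by lia.
  change (Gc a2 b2 c2) with (Fc a2 b2 c2).
  replace (k - 1 - 1)%nat with (k - 2)%nat by lia.
  replace (k + 1 - 1)%nat with k by lia.
  fold m.
  set (n := S m).
  pose proof (FP' n k ltac:(lia) ltac:(lia)).
  pose proof (FP' n (k-1) ltac:(lia) ltac:(lia)).
  pose proof (FP' n (k+1) ltac:(lia) ltac:(lia)).
  pose proof (GP' n k ltac:(lia) ltac:(lia)).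
  pose proof (GP' n (k-1) ltac:(lia) ltac:(lia)).
  pose proof (GP' n (k+1) ltac:(lia) ltac:(lia)).
  pose proof (TN m (k-2)). pose proof (TN m (k-1)). pose proof (TN m k). pose proof (TN m (k+1)).
  assert (Hz1 : 0 < Tn m (k-1)) by (apply Tpos; auto; lia).
  assert (Hz2 : 0 < Tn m k) by (apply Tpos; auto; lia).
  replace ((F n k ^ l * Tn m k + G n k ^ l * Tn m (k - 1)) *
      (F n k ^ l * Tn m k + G n k ^ l * Tn m (k - 1)))
    with ((F n k ^ l * Tn m k + G n k ^ l * Tn m (k - 1))^2) by ring.
  apply core with (x0 := F n k ^ l) (y0 := G n k ^ l).
  - rewrite !Rpow_mult_distr; ring.
  - apply H1lem with (v0' := (F m k * G m k)^l) (w0' := (F m (k-1) * G m (k+1))^l);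
      try (apply pow_le; try apply Rmult_le_pos; lra); try lra.
    destruct (Nat.eq_dec k m) as [->|Hne].
    + left. apply T_big. lia.
    + right. split; [apply pow_lt; apply Rmult_lt_0_compat; [apply FP'|apply GP']; lia|].
      split.
      * apply IH; lia.
      * apply C1p; auto; lia.
  - apply H2lem with (vm := (F m (k-1) * G m (k-1))^l) (wm := (F m (k-2) * G m k)^l);
      try (apply pow_le; try apply Rmult_le_pos; lra); try lra.
    destruct (Nat.eq_dec k 2) as [->|Hne].
    + left. apply T_k0.
    + right. split; [apply pow_lt; apply Rmult_lt_0_compat; [apply FP'|apply GP']; lia|].
      split.
      * pose proof (IH (k-1)%nat ltac:(lia) ltac:(lia)) as I.
        replace (k - 1 - 1)%nat with (k - 2)%nat in I by lia.
        replace (k - 1 + 1)%nat with k in I by lia.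
        exact I.
      * apply C2p; auto; lia.
  - apply H3lem with (vm := (F m (k-1) * G m (k-1))^l) (wm := (F m (k-2) * G m k)^l)
      (v0' := (F m k * G m k)^l) (w0' := (F m (k-1) * G m (k+1))^l);
      try (apply pow_le; try apply Rmult_le_pos; lra); try lra.
    destruct (Nat.eq_dec k 2) as [->|Hne]; [left; apply T_k0|].
    destruct (Nat.eq_dec k m) as [->|Hne']; [right; left; apply T_big; lia|].
    right; right.
    split; [apply pow_lt; apply Rmult_lt_0_compat; [apply FP'|apply GP']; lia|].
    split; [apply pow_lt; apply Rmult_lt_0_compat; [apply FP'|apply GP']; lia|].
    split; [lra|]. split; [lra|].
    split.
    { pose proof (IH (k-1)%nat ltac:(lia) ltac:(lia)) as I.
      replace (k - 1 - 1)%nat with (k - 2)%nat in I by lia.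
      replace (k - 1 + 1)%nat with k in I by lia.
      exact I. }
    split; [apply IH; lia|].
    apply C3p; auto; lia.
Qed.

Lemma Inv_all m : (1 <= m)%nat -> Inv m.
Proof.
  induction m as [|m IHm]; intros H; [lia|].
  destruct (Nat.eq_dec m 0) as [->|Hne].
  - intros k Hk1 Hk2. lia.
  - apply Inv_step; [lia|]. apply IHm; lia.
Qed.

Lemma LC_pos n k : (1 <= n)%nat -> Tn n (k-1) * Tn n (k+1) <= Tn n k ^ 2.
Proof.
  intros Hn.
  pose proof (TN n k). pose proof (TN n (k-1)). pose proof (TN n (k+1)).
  destruct (Compare_dec.le_lt_dec k 1) as [Hk|Hk].
  - replace (k-1)%nat with 0%nat by lia. rewrite T_k0. nra.
  - destruct (Compare_dec.le_lt_dec n k) as [Hk'|Hk'].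
    + rewrite (T_big _ _ _ _ _ _ _ n (k+1)) by lia. nra.
    + pose proof (Inv_all n Hn k ltac:(lia) ltac:(lia)) as I.
      set (v := (F n k * G n k)^l) in I.
      set (w := (F n (k-1) * G n (k+1))^l) in I.
      assert (Hw : 0 < w).
      { apply pow_lt; apply Rmult_lt_0_compat; [apply FP'|apply GP']; lia. }
      assert (Hwv : w <= v).
      { apply pow_mono. apply Rmult_le_pos; apply Rlt_le; [apply FP'|apply GP']; lia.
        apply prod2.
        - unfold Fc. rewrite INR_pred by lia. nra.
        - unfold Fc. rewrite INR_succ. nra.
        - apply Rlt_le, FP'; lia.
        - apply Rlt_le, GP'; lia. }
      apply cancel_l with w; auto.
      assert (w * (Tn n (k - 1) * Tn n (k + 1)) <= v * (Tn n (k - 1) * Tn n (k + 1))).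
      { apply Rmult_le_compat_r; [nra|auto]. }
      nra.
Qed.
End St.

Lemma lim0 (h : R -> R) : continuity_pt h 0 -> (forall e, 0 < e -> 0 <= h e) -> 0 <= h 0.
Proof.
  intros Hc Hp.
  destruct (Rle_lt_dec 0 (h 0)) as [H|H]; auto.
  exfalso.
  unfold continuity_pt, continue_in, limit1_in, limit_in in Hc.
  destruct (Hc (- h 0) ltac:(lra)) as [alp [Halp Hx]].
  specialize (Hx (alp/2)).
  assert (Hd : D_x no_cond 0 (alp/2) /\ dist R_met (alp/2) 0 < alp).
  { split. split. exact I. lra. simpl. unfold R_dist. rewrite Rminus_0_r, Rabs_right; lra. }
  specialize (Hx Hd). simpl in Hx. unfold R_dist in Hx.
  pose proof (Hp (alp/2) ltac:(lra)).
  pose proof (Rle_abs (h (alp/2) - h 0)). lra.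
Qed.

Lemma continuity_ext (f g : R -> R) : (forall x, f x = g x) -> continuity f -> continuity g.
Proof. intros He Hf x. apply continuity_pt_locally_ext with f 1; [lra| |apply Hf]. intros; apply He. Qed.

Lemma cont_pow (f : R -> R) (n : nat) : continuity f -> continuity (fun e => f e ^ n).
Proof.
  intros Hf. induction n as [|n IH].
  - apply continuity_const. intros x y. reflexivity.
  - exact (continuity_mult f (fun e => f e ^ n) Hf IH).
Qed.

Lemma cont_lin (A : R) : continuity (fun e => A + e).
Proof.
  exact (continuity_plus (fun _ => A) (fun e => e) (continuity_const (fun _ : R => A) (fun x y => eq_refl)) (derivable_continuous id derivable_id)).
Qed.

Lemma cont_T (a b c a2 b2 c2 : R) (l n : nat) : forall k,
  continuity (fun e => T a b (c+e) a2 b2 (c2+e) l n k).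
Proof.
  induction n as [|[|m] IH]; intros k.
  - apply continuity_const. intros x y. reflexivity.
  - apply continuity_const. intros x y. reflexivity.
  - change (continuity (fun e => if (Nat.leb 1 k && Nat.leb k (S (S m)))%bool then
      (a * INR (S (S m)) + b * INR k + (c+e)) ^ l * T a b (c+e) a2 b2 (c2+e) l (S m) k
      + (a2 * INR (S (S m)) + b2 * INR k + (c2+e)) ^ l * T a b (c+e) a2 b2 (c2+e) l (S m) (k - 1)
      else 0)).
    destruct (Nat.leb 1 k && Nat.leb k (S (S m)))%bool.
    + apply (continuity_plus (fun e => (a * INR (S (S m)) + b * INR k + (c+e)) ^ l * T a b (c+e) a2 b2 (c2+e) l (S m) k)
        (fun e => (a2 * INR (S (S m)) + b2 * INR k + (c2+e)) ^ l * T a b (c+e) a2 b2 (c2+e) l (S m) (k - 1))).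
      * apply (continuity_mult (fun e => (a * INR (S (S m)) + b * INR k + (c+e)) ^ l)).
        -- apply cont_pow.
           assert (E : continuity (fun e => (a * INR (S (S m)) + b * INR k + c) + e)) by apply cont_lin.
           eapply continuity_ext; [|exact E]. intros x; simpl; ring.
        -- apply IH.
      * apply (continuity_mult (fun e => (a2 * INR (S (S m)) + b2 * INR k + (c2+e)) ^ l)).
        -- apply cont_pow.
           assert (E : continuity (fun e => (a2 * INR (S (S m)) + b2 * INR k + c2) + e)) by apply cont_lin.
           eapply continuity_ext; [|exact E]. intros x; simpl; ring.
        -- apply IH.
    + apply continuity_const. intros x y. reflexivity.
Qed.

Theorem theorem1p4 (l : nat) (a b c a' b' c' : R) :
  (1 <= l)%nat ->
  0 <= a -> 0 <= a' -> 0 <= b -> - a' <= b' -> b' <= 0 ->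
  0 <= a + b + c -> 0 <= a' + b' + c' ->
  forall n k : nat, (1 <= n)%nat ->
    T a b c a' b' c' l n k ^ 2 >=
    T a b c a' b' c' l n (k - 1) * T a b c a' b' c' l n (k + 1).
Proof.
  intros Hl Ha Ha' Hb Hb1 Hb2 Hm Hm' n k Hn.
  set (h := fun e => T a b (c+e) a' b' (c'+e) l n k ^ 2
                    - T a b (c+e) a' b' (c'+e) l n (k-1) * T a b (c+e) a' b' (c'+e) l n (k+1)).
  assert (H0 : 0 <= h 0).
  { apply lim0.
    - unfold h.
      apply (continuity_minus (fun e => T a b (c+e) a' b' (c'+e) l n k ^ 2)
        (fun e => T a b (c+e) a' b' (c'+e) l n (k-1) * T a b (c+e) a' b' (c'+e) l n (k+1))).
      + apply (cont_pow (fun e => T a b (c+e) a' b' (c'+e) l n k)). apply cont_T.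
      + apply (continuity_mult (fun e => T a b (c+e) a' b' (c'+e) l n (k-1))); apply cont_T.
    - intros e He. unfold h.
      assert (L : T a b (c+e) a' b' (c'+e) l n (k-1) * T a b (c+e) a' b' (c'+e) l n (k+1)
                  <= T a b (c+e) a' b' (c'+e) l n k ^ 2).
      { apply LC_pos; auto; lra. }
      lra. }
  unfold h in H0. rewrite !Rplus_0_r in H0. lra.
Qed.
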